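(* Let $\mathcal H$ and $\mathcal K$ be complex Hilbert spaces and $k \in \mathbb N$ with $k < \dim \mathcal H$. Let $\phi \colon \mathcal F_s(\mathcal H) \to \mathcal F_s(\mathcal K)$ be a linear map such that $\phi(\mathcal P_k(\mathcal H)) \subset \mathcal P_f(\mathcal K)$. Then there exists $m \in \mathbb N \cup \{0\}$ with $m \le \dim \mathcal K$ such that $\phi(\mathcal P_k(\mathcal H)) \subset \mathcal P_m(\mathcal K)$.
   Context: For a complex Hilbert space $\mathcal H$, $\mathcal F_s(\mathcal H)$ is the real vector space of bounded self-adjoint finite-rank operators on $\mathcal H$. A projection is a self-adjoint idempotent bounded operator; $\mathcal P_k(\mathcal H)$ is the set of projections of rank $k$ and $\mathcal P_f(\mathcal H)$ the set of all finite-rank projections. *)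

(* Defs.v *)
From HB Require Import structures.
From mathcomp Require Import all_boot all_order all_algebra.
From mathcomp Require Import reals complex.
Set Implicit Arguments. Unset Strict Implicit. Unset Printing Implicit Defensive.
Import Order.TTheory GRing.Theory Num.Theory.
Local Open Scope ring_scope.
Local Open Scope complex_scope.

Section Hilbert.
Variables (R : realType) (V : lmodType R[i]) (ip : V -> V -> R[i]).

Definition inner_product : Prop :=
  [/\ (forall x y, ip y x = (ip x y)^*),
      (forall (a : R[i]) x y z, ip (a *: x + y) z = a * ip x z + ip y z),
      (forall x, 0 <= ip x x) &
      (forall x, ip x x = 0 -> x = 0)].

Definition hnorm (x : V) : R := Num.sqrt (complex.Re (ip x x)).

Definition complete : Prop :=
  forall u : nat -> V,
    (forall e : R, 0 < e -> exists N, forall n m, (N <= n)%N -> (N <= m)%N ->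
        hnorm (u n - u m) < e) ->
    exists l : V, forall e : R, 0 < e -> exists N, forall n, (N <= n)%N ->
        hnorm (u n - l) < e.

Definition hilbert : Prop := inner_product /\ complete.

Definition bounded_op (A : V -> V) : Prop :=
  (forall (a : R[i]) x y, A (a *: x + y) = a *: A x + A y) /\
  exists C : R, forall x, hnorm (A x) <= C * hnorm x.

Definition selfadjoint (A : V -> V) : Prop := forall x y, ip (A x) y = ip x (A y).

Definition lin_indep n (v : 'I_n -> V) : Prop :=
  forall c : 'I_n -> R[i], \sum_(i < n) c i *: v i = 0 -> forall i, c i = 0.

Definition in_span n (v : 'I_n -> V) (y : V) : Prop :=
  exists c : 'I_n -> R[i], y = \sum_(i < n) c i *: v i.

Definition finite_rank (A : V -> V) : Prop :=
  exists n (v : 'I_n -> V), forall x, in_span v (A x).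

Definition rank_eq (A : V -> V) (k : nat) : Prop :=
  exists v : 'I_k -> V, [/\ lin_indep v, (forall i, exists x, A x = v i) &
                             (forall x, in_span v (A x))].

Definition Fs (A : V -> V) : Prop := [/\ bounded_op A, selfadjoint A & finite_rank A].

Definition projection (A : V -> V) : Prop :=
  [/\ bounded_op A, selfadjoint A & forall x, A (A x) = A x].

Definition Pk (k : nat) (A : V -> V) : Prop := projection A /\ rank_eq A k.
Definition Pf (A : V -> V) : Prop := projection A /\ finite_rank A.

Definition dim_gt (k : nat) : Prop := exists v : 'I_k.+1 -> V, lin_indep v.
Definition dim_ge (m : nat) : Prop := exists v : 'I_m -> V, lin_indep v.

End Hilbert.

Definition Fs_linear (R : realType) (H K : lmodType R[i])
  (ipH : H -> H -> R[i]) (ipK : K -> K -> R[i]) (phi : (H -> H) -> (K -> K)) : Prop :=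
  (forall A, Fs ipH A -> Fs ipK (phi A)) /\
  (forall (a b : R) (A B : H -> H), Fs ipH A -> Fs ipH B ->
     phi (fun x => a%:C *: A x + b%:C *: B x) =
     (fun y => a%:C *: phi A y + b%:C *: phi B y)).

(* Main.v *)
Require Import Defs.
From HB Require Import structures.
From mathcomp Require Import all_boot all_order all_algebra.
From mathcomp Require Import reals complex.
From mathcomp Require Import ring lra.
From Stdlib Require Classical_Prop IndefiniteDescription FunctionalExtensionality.
Import Order.TTheory GRing.Theory Num.Theory.
Local Open Scope ring_scope.
Local Open Scope complex_scope.
Set Implicit Arguments. Unset Strict Implicit.
Notation ReC := complex.Re.

Lemma ReD (R : realType) (x y : R[i]) : ReC (x + y) = ReC x + ReC y.
Proof. by case: x => ? ?; case: y => ? ?. Qed.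
Lemma ReMr (R : realType) (a : R) (z : R[i]) : ReC (a%:C * z) = a * ReC z.
Proof. case: z => x y /=. ring. Qed.
Lemma ReN (R : realType) (x : R[i]) : ReC (- x) = - ReC x.
Proof. by case: x. Qed.
Lemma ReR (R : realType) (a : R) : ReC (a%:C) = a.
Proof. by []. Qed.
Lemma ge0_real (R : realType) (z : R[i]) : 0 <= z -> z = (ReC z)%:C /\ 0 <= ReC z.
Proof.
case: z => a b; rewrite lecE /= => /andP [/eqP hb ha]; split => //.
by rewrite hb.
Qed.

Section IP.
Variables (R : realType) (V : lmodType R[i]) (ip : V -> V -> R[i]).
Hypothesis hip : inner_product ip.

Lemma ipC x y : ip y x = (ip x y)^*. Proof. by case: hip. Qed.
Lemma ip_lin a x y z : ip (a *: x + y) z = a * ip x z + ip y z. Proof. by case: hip. Qed.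
Lemma ip0l z : ip 0 z = 0.
Proof.
have := ip_lin 1 0 0 z; rewrite scaler0 addr0 mul1r => h.
by apply: (addrI (ip 0 z)); rewrite addr0 -h.
Qed.
Lemma ipDl x y z : ip (x + y) z = ip x z + ip y z.
Proof. by have := ip_lin 1 x y z; rewrite scale1r mul1r. Qed.
Lemma ipZl a x z : ip (a *: x) z = a * ip x z.
Proof. by have := ip_lin a x 0 z; rewrite !addr0 ip0l addr0. Qed.
Lemma ipNl x z : ip (- x) z = - ip x z.
Proof. by rewrite -scaleN1r ipZl mulN1r. Qed.
Lemma ipBl x y z : ip (x - y) z = ip x z - ip y z.
Proof. by rewrite ipDl ipNl. Qed.
Lemma ip0r x : ip x 0 = 0.
Proof. by rewrite ipC ip0l conjc0. Qed.
Lemma ipDr x y z : ip x (y + z) = ip x y + ip x z.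
Proof. by rewrite (ipC y x) (ipC z x) ipC ipDl; apply: raddfD. Qed.
Lemma ipZr a x y : ip x (a *: y) = conjc a * ip x y.
Proof. by rewrite (ipC y x) ipC ipZl; apply: rmorphM. Qed.
Lemma ipNr x y : ip x (- y) = - ip x y.
Proof. by rewrite (ipC y x) ipC ipNl; apply: raddfN. Qed.
Lemma ipBr x y z : ip x (y - z) = ip x y - ip x z.
Proof. by rewrite ipDr ipNr. Qed.
Lemma ip_suml (I : Type) (r : seq I) (P : pred I) (F : I -> V) z :
  ip (\sum_(i <- r | P i) F i) z = \sum_(i <- r | P i) ip (F i) z.
Proof. exact: (big_morph (fun x => ip x z) (fun x y => ipDl x y z) (ip0l z)). Qed.
Lemma ip_sumr (I : Type) (r : seq I) (P : pred I) (F : I -> V) z :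
  ip z (\sum_(i <- r | P i) F i) = \sum_(i <- r | P i) ip z (F i).
Proof. exact: (big_morph (fun x => ip z x) (fun x y => ipDr z x y) (ip0r z)). Qed.
Lemma ipxx_ge0 x : 0 <= ip x x. Proof. by case: hip. Qed.
Lemma ipxx_eq0 x : ip x x = 0 -> x = 0. Proof. by case: hip => _ _ _; apply. Qed.
Lemma ipxx_Re x : ip x x = (ReC (ip x x))%:C.
Proof. by case: (ge0_real (ipxx_ge0 x)). Qed.
Lemma Re_ipxx_ge0 x : 0 <= ReC (ip x x).
Proof. by case: (ge0_real (ipxx_ge0 x)). Qed.
Lemma Re_ipxx_gt0 x : x != 0 -> 0 < ReC (ip x x).
Proof.
move=> hx; rewrite lt_def Re_ipxx_ge0 andbT; apply/eqP => h.
by move/eqP: hx; apply; apply: ipxx_eq0; rewrite ipxx_Re h.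
Qed.

Definition lin (A : V -> V) := forall a x y, A (a *: x + y) = a *: A x + A y.

Section Lin.
Variable A : V -> V.
Hypothesis hA : lin A.
Lemma LA0 : A 0 = 0.
Proof.
have := hA 1 0 0; rewrite scaler0 addr0 scale1r => h.
by apply: (addrI (A 0)); rewrite addr0 -h.
Qed.
Lemma LAD x y : A (x + y) = A x + A y.
Proof. by have := hA 1 x y; rewrite !scale1r. Qed.
Lemma LAZ a x : A (a *: x) = a *: A x.
Proof. by have := hA a x 0; rewrite !addr0 LA0 addr0. Qed.
Lemma LAN x : A (- x) = - A x.
Proof. by rewrite -scaleN1r LAZ scaleN1r. Qed.
Lemma LAB x y : A (x - y) = A x - A y.
Proof. by rewrite LAD LAN. Qed.
Lemma LA_sum (I : Type) (r : seq I) (P : pred I) (F : I -> V) :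
  A (\sum_(i <- r | P i) F i) = \sum_(i <- r | P i) A (F i).
Proof. exact: (big_morph A LAD LA0). Qed.
End Lin.

Definition isproj (A : V -> V) :=
  [/\ lin A, selfadjoint ip A & forall x, A (A x) = A x].

Lemma projection_isproj A : projection ip A -> isproj A.
Proof. by case=> [[hl _] hs hi]; split. Qed.

Section Proj.
Variable A : V -> V.
Hypothesis hA : isproj A.
Let hl : lin A. Proof. by case: hA. Qed.
Let hs : selfadjoint ip A. Proof. by case: hA. Qed.
Let hi : forall x, A (A x) = A x. Proof. by case: hA. Qed.

Lemma proj_ipAA x : ip (A x) x = ip (A x) (A x).
Proof. by rewrite -hs hi. Qed.
Lemma proj_orth x y : ip (A x) (y - A y) = 0.
Proof. by rewrite hs (LAB hl) hi subrr ip0r. Qed.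
Lemma proj_pyth x : ip x x = ip (A x) (A x) + ip (x - A x) (x - A x).
Proof.
set w := x - A x.
have e : x = A x + w by rewrite /w addrC subrK.
have h1 : ip (A x) w = 0 := proj_orth x x.
have h2 : ip w (A x) = 0 by rewrite ipC h1 conjc0.
clearbody w; by rewrite {1 2}e ipDl !ipDr h1 h2 addr0 add0r.
Qed.
Lemma proj_form x : 0 <= ReC (ip (A x) x) <= ReC (ip x x).
Proof.
rewrite proj_ipAA Re_ipxx_ge0 /= (proj_pyth x) ReD.
by rewrite lerDl Re_ipxx_ge0.
Qed.
Lemma proj_bound x : hnorm ip (A x) <= 1 * hnorm ip x.
Proof.
rewrite mul1r /hnorm ler_sqrt ?Re_ipxx_ge0 // (proj_pyth x) ReD.
by rewrite lerDl Re_ipxx_ge0.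
Qed.
End Proj.

End IP.

Lemma cid_fun (A B : Type) (P : A -> B -> Prop) :
  (forall a, exists b, P a b) -> exists f : A -> B, forall a, P a (f a).
Proof.
move=> h; exists (fun a => proj1_sig (IndefiniteDescription.constructive_indefinite_description _ (h a))).
by move=> a; case: (IndefiniteDescription.constructive_indefinite_description _ (h a)).
Qed.

Section Span.
Variables (R : realType) (V : lmodType R[i]).

Lemma span0 n (v : 'I_n -> V) : in_span v 0.
Proof. by exists (fun _ => 0); rewrite big1 // => i _; rewrite scale0r. Qed.

Lemma spanD n (v : 'I_n -> V) x y : in_span v x -> in_span v y -> in_span v (x + y).
Proof.
move=> [c ->] [d ->]; exists (fun i => c i + d i).
by rewrite -big_split /=; apply: eq_bigr => i _; rewrite scalerDl.
Qed.

Lemma spanZ n (v : 'I_n -> V) a x : in_span v x -> in_span v (a *: x).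
Proof.
move=> [c ->]; exists (fun i => a * c i).
by rewrite scaler_sumr; apply: eq_bigr => i _; rewrite scalerA.
Qed.

Lemma spanN n (v : 'I_n -> V) x : in_span v x -> in_span v (- x).
Proof. by move=> h; rewrite -scaleN1r; apply: spanZ. Qed.

Lemma spanB n (v : 'I_n -> V) x y : in_span v x -> in_span v y -> in_span v (x - y).
Proof. by move=> hx hy; apply: spanD => //; apply: spanN. Qed.

Lemma sum_delta n (v : 'I_n -> V) i :
  \sum_(j < n) (if j == i then 1 else 0) *: v j = v i.
Proof.
rewrite (bigD1 i) //= eqxx scale1r big1 ?addr0 // => j /negbTE ->.
by rewrite scale0r.
Qed.

Lemma span_gen n (v : 'I_n -> V) i : in_span v (v i).
Proof. by exists (fun j => if j == i then 1 else 0); rewrite sum_delta. Qed.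

Lemma span_sum n (v : 'I_n -> V) (I : Type) (r : seq I) (P : pred I) (F : I -> V) :
  (forall i, P i -> in_span v (F i)) -> in_span v (\sum_(i <- r | P i) F i).
Proof.
move=> h; apply: (big_ind (in_span v)); [exact: span0| exact: spanD | exact: h].
Qed.

Lemma span_trans n m (v : 'I_n -> V) (w : 'I_m -> V) y :
  in_span w y -> (forall j, in_span v (w j)) -> in_span v y.
Proof.
move=> [c ->] h; apply: span_sum => j _; exact: spanZ.
Qed.

Lemma steinitz m n (v : 'I_m -> V) (u : 'I_n -> V) :
  lin_indep v -> (forall i, in_span u (v i)) -> (m <= n)%N.
Proof.
move=> hind hsp.
have [Mf hM] := cid_fun hsp.
rewrite leqNgt; apply/negP => hnm.
pose M : 'M[R[i]]_(m, n) := \matrix_(i, j) Mf i j.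
have hk : kermx M != 0.
  rewrite -mxrank_eq0 mxrank_ker; have := rank_leq_col M.
  move=> hr; rewrite subn_eq0 -ltnNge; exact: (leq_ltn_trans hr hnm).
have [i0 [j0 hij]] : exists i j, kermx M i j != 0.
  case: (Classical_Prop.classic (exists i j, kermx M i j != 0)) => // hn.
  move/eqP: hk; case; apply/matrixP => i j; rewrite [RHS]mxE.
  case: (Classical_Prop.classic (kermx M i j = 0)) => // hne.
  by exfalso; apply: hn; exists i, j; apply/eqP.
pose c := row i0 (kermx M).
have hc0 : c *m M = 0 by rewrite /c -row_mul mulmx_ker row0.
have hsum : \sum_(k < m) c 0 k *: v k = 0.
  transitivity (\sum_(j < n) (c *m M) 0 j *: u j); last first.
    by rewrite hc0 big1 // => j _; rewrite mxE scale0r.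
  transitivity (\sum_(k < m) \sum_(j < n) (c 0 k * Mf k j) *: u j).
    apply: eq_bigr => k _; rewrite (hM k) scaler_sumr.
    by apply: eq_bigr => j _; rewrite scalerA.
  rewrite exchange_big /=; apply: eq_bigr => j _.
  rewrite -scaler_suml [in RHS]mxE; congr (_ *: _); apply: eq_bigr => k _.
  by rewrite [M k j]mxE.
have := hind _ hsum j0; rewrite /c mxE => h.
by move/eqP: hij.
Qed.

Definition ext m (v : 'I_m -> V) (a : V) : 'I_m.+1 -> V :=
  fun i => if unlift ord_max i is Some j then v j else a.

Lemma ext_widen m (v : 'I_m -> V) a (i : 'I_m) :
  ext v a (widen_ord (leqnSn m) i) = v i.
Proof.
have -> : widen_ord (leqnSn m) i = lift ord_max i by apply: ord_inj; rewrite lift_max.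
by rewrite /ext liftK.
Qed.

Lemma ext_max m (v : 'I_m -> V) a : ext v a ord_max = a.
Proof. by rewrite /ext unlift_none. Qed.

Lemma ord_caseS m (P : 'I_m.+1 -> Prop) :
  (forall i : 'I_m, P (widen_ord (leqnSn m) i)) -> P ord_max -> forall i, P i.
Proof.
move=> h1 h2 i; case: (unliftP ord_max i) => [j ->|->] //.
have -> : lift ord_max j = widen_ord (leqnSn m) j by apply: ord_inj; rewrite lift_max.
exact: h1.
Qed.

Lemma extract n (w : 'I_n -> V) :
  exists m (v : 'I_m -> V), [/\ lin_indep v, (forall i, exists j, v i = w j) &
                                (forall j, in_span v (w j))].
Proof.
elim: n w => [|n IH] w.
  exists 0%N, w; split; first by move=> c _ [].
  - by move=> i; exists i.
  - by case.
pose w' := fun j : 'I_n => w (widen_ord (leqnSn n) j).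
have [m [v' [hi hv hs]]] := IH w'.
case: (Classical_Prop.classic (in_span v' (w ord_max))) => ha.
  exists m, v'; split => //.
  - by move=> i; have [j ->] := hv i; exists (widen_ord (leqnSn n) j).
  - by apply: ord_caseS.
exists m.+1, (ext v' (w ord_max)); split.
- move=> c; rewrite big_ord_recr /= ext_max.
  under eq_bigr do rewrite ext_widen.
  move=> hc.
  have hcm : c ord_max = 0.
    case: (Classical_Prop.classic (c ord_max = 0)) => // hne; case: ha.
    have -> : w ord_max = - (c ord_max)^-1 *: \sum_(i < m) c (widen_ord (leqnSn m) i) *: v' i.
      apply: (scalerI (a := c ord_max)); first by apply/eqP.
      rewrite scalerA mulrN mulfV ?scaleN1r; last by apply/eqP.
      by apply/eqP; rewrite -addr_eq0 addrC hc.
    apply: spanZ; apply: span_sum => i _; apply: spanZ; exact: span_gen.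
  rewrite hcm scale0r addr0 in hc.
  apply: ord_caseS => // i; exact: hi _ hc i.
- apply: ord_caseS => [i|]; last by exists ord_max; rewrite ext_max.
  rewrite ext_widen; have [j ->] := hv i; by exists (widen_ord (leqnSn n) j).
- have hsub : forall i, in_span (ext v' (w ord_max)) (v' i).
    by move=> i; rewrite -(ext_widen v' (w ord_max)); apply: span_gen.
  apply: ord_caseS => [j|]; last by have := span_gen (ext v' (w ord_max)) ord_max; rewrite ext_max.
  exact: span_trans (hs j) hsub.
Qed.

End Span.

Section KSide.
Variables (R : realType) (V : lmodType R[i]) (ip : V -> V -> R[i]).
Hypothesis hip : inner_product ip.

Lemma rank_of_Pf A : Pf ip A -> exists m, rank_eq A m.
Proof.
case=> hp [n [w hw]].
have hl : lin A by case: hp => [[]].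
have hi : forall x, A (A x) = A x by case: hp.
have [m [v [hv1 hv2 hv3]]] := extract (fun j => A (w j)).
exists m, v; split => //.
- by move=> i; have [j ->] := hv2 i; exists (w j).
- move=> x; rewrite -[A x]hi; have [c ->] := hw x.
  rewrite (LA_sum hl); apply: span_sum => j _; rewrite (LAZ hl); apply: spanZ.
  exact: hv3.
Qed.

Lemma rank_le A B m m' : isproj ip A -> isproj ip B -> rank_eq A m -> rank_eq B m' ->
  (forall y, A y = y -> B y = 0 -> y = 0) -> (m <= m')%N.
Proof.
move=> [hlA _ hiA] [hlB _ _] [v [hv1 hv2 hv3]] [u [hu1 hu2 hu3]] hinj.
apply: (@steinitz _ _ _ _ (fun i => B (v i)) u); last by move=> i; exact: hu3.
move=> c hc.
have hAv : forall i, A (v i) = v i by move=> i; have [x <-] := hv2 i; rewrite hiA.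
have hy : \sum_(i < m) c i *: v i = 0.
  apply: hinj.
  - by rewrite (LA_sum hlA); apply: eq_bigr => i _; rewrite (LAZ hlA) hAv.
  - by rewrite (LA_sum hlB) -[RHS]hc; apply: eq_bigr => i _; rewrite (LAZ hlB).
exact: hv1 hy.
Qed.

Lemma closeK (Q Q' Q0 Q1 Q2 : V -> V) (a0 a1 a2 b0 b1 b2 : R) :
  isproj ip Q0 -> isproj ip Q1 -> isproj ip Q2 ->
  (forall y, Q y = a0%:C *: Q0 y + (a1%:C *: Q1 y + a2%:C *: Q2 y)) ->
  (forall y, Q' y = b0%:C *: Q0 y + (b1%:C *: Q1 y + b2%:C *: Q2 y)) ->
  (forall r0 r1 r2 N : R, 0 < N -> 0 <= r0 <= N -> 0 <= r1 <= N -> 0 <= r2 <= N ->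
     (a0 - b0) * r0 + (a1 - b1) * r1 + (a2 - b2) * r2 < N) ->
  forall y, Q y = y -> Q' y = 0 -> y = 0.
Proof.
move=> h0 h1 h2 hQ hQ' hin y hy hy'.
case: (Classical_Prop.classic (y = 0)) => // hne; exfalso.
have hN := Re_ipxx_gt0 hip (introN eqP hne).
have e1 : ReC (ip y y) = a0 * ReC (ip (Q0 y) y) + a1 * ReC (ip (Q1 y) y) + a2 * ReC (ip (Q2 y) y).
  by rewrite -{1}hy hQ !(ipDl hip) !(ipZl hip) !ReD !ReMr addrA.
have e2 : ReC (ip (Q' y) y) = b0 * ReC (ip (Q0 y) y) + b1 * ReC (ip (Q1 y) y) + b2 * ReC (ip (Q2 y) y).
  by rewrite hQ' !(ipDl hip) !(ipZl hip) !ReD !ReMr addrA.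
rewrite hy' (ip0l hip) in e2.
have e0 : ReC (0 : R[i]) = 0 by [].
rewrite e0 in e2.
move: (hin _ _ _ _ hN (proj_form hip h0 y) (proj_form hip h1 y) (proj_form hip h2 y)) e1 e2.
move: (ReC (ip (Q0 y) y)) (ReC (ip (Q1 y) y)) (ReC (ip (Q2 y) y)) (ReC (ip y y)) => r0 r1 r2 N h e1 e2.
have hE : (a0 - b0) * r0 + (a1 - b1) * r1 + (a2 - b2) * r2 = N.
  by rewrite e1 -[RHS]subr0 e2; ring.
by move: h; rewrite hE ltxx.
Qed.

End KSide.

Definition glue (T : Type) n (i : 'I_n.+1) (e : T) (f : 'I_n -> T) : 'I_n.+1 -> T :=
  fun l => if unlift i l is Some j then f j else e.

Lemma glue_lift T n (i : 'I_n.+1) e (f : 'I_n -> T) j : glue i e f (lift i j) = f j.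
Proof. by rewrite /glue liftK. Qed.
Lemma glue_i T n (i : 'I_n.+1) e (f : 'I_n -> T) : glue i e f i = e.
Proof. by rewrite /glue unlift_none. Qed.

Lemma sum_lift (V : nmodType) n (i : 'I_n.+1) (F : 'I_n.+1 -> V) :
  \sum_(l < n.+1) F l = F i + \sum_(j < n) F (lift i j).
Proof. by rewrite (bigD1_ord i) //. Qed.

Lemma ord_case_lift n (i : 'I_n.+1) (P : 'I_n.+1 -> Prop) :
  P i -> (forall j, P (lift i j)) -> forall l, P l.
Proof. by move=> h1 h2 l; case: (unliftP i l) => [j ->|->]. Qed.

Lemma conjcM (R : realType) (x y : R[i]) : conjc (x * y) = conjc x * conjc y.
Proof. exact: rmorphM. Qed.
Lemma conjcV (R : realType) (x : R[i]) : conjc (x^-1) = (conjc x)^-1.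
Proof. exact: conjc_inv. Qed.

Section HSide.
Variables (R : realType) (V : lmodType R[i]) (ip : V -> V -> R[i]).
Hypothesis hip : inner_product ip.

Lemma conj_real_ip x : conjc (ip x x) = ip x x.
Proof. by rewrite (ipxx_Re hip) conjc_real. Qed.

Lemma isproj_projection X : isproj ip X -> projection ip X.
Proof.
move=> hX; case: (hX) => hl hs hi; split => //; split => //.
by exists 1 => x; apply: proj_bound.
Qed.

Definition pw (w : V) : V -> V := fun x => (ip x w / ip w w) *: w.

Lemma pw_lin w : lin (pw w).
Proof.
move=> a x y; rewrite /pw (ipDl hip) (ipZl hip) scalerA -scalerDl.
by congr (_ *: _); rewrite mulrDl mulrA.
Qed.

Lemma pw_sa w : selfadjoint ip (pw w).
Proof.
move=> x y; rewrite /pw (ipZl hip) (ipZr hip) conjcM conjcV conj_real_ip.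
by rewrite -(ipC hip) mulrAC [RHS]mulrC mulrA.
Qed.

Lemma pw_w w : w != 0 -> pw w w = w.
Proof.
move=> hw; rewrite /pw mulfV ?scale1r //.
by apply/eqP => h; move/eqP: hw; apply; apply: (ipxx_eq0 hip).
Qed.

Lemma pw_orth w x : ip x w = 0 -> pw w x = 0.
Proof. by move=> h; rewrite /pw h mul0r scale0r. Qed.

Lemma pw_scale w x (a : R[i]) : pw w (a *: x) = a *: pw w x.
Proof. by rewrite /pw (ipZl hip) scalerA mulrA. Qed.

Definition RangeOf (X : V -> V) n (v : 'I_n -> V) :=
  [/\ isproj ip X, (forall x, in_span v (X x)) & (forall i, X (v i) = v i)].

Lemma fix_span X n (v : 'I_n -> V) y : lin X -> (forall i, X (v i) = v i) ->
  in_span v y -> X y = y.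
Proof.
move=> hl hv [c ->]; rewrite (LA_sum hl); apply: eq_bigr => i _.
by rewrite (LAZ hl) hv.
Qed.

Lemma ip_sep x y : (forall z, ip x z = ip y z) -> x = y.
Proof.
move=> h; apply/eqP; rewrite -subr_eq0; apply/eqP; apply: (ipxx_eq0 hip).
by rewrite (ipBl hip) h subrr.
Qed.

Lemma range_unique X Y n (v : 'I_n -> V) : RangeOf X v -> RangeOf Y v -> X = Y.
Proof.
move=> [[hlX hsX hiX] hspX hfX] [[hlY hsY hiY] hspY hfY].
apply: FunctionalExtensionality.functional_extensionality => x.
have e1 : forall x, Y (X x) = X x by move=> z; apply: (fix_span hlY hfY (hspX z)).
have e2 : forall x, X (Y x) = Y x by move=> z; apply: (fix_span hlX hfX (hspY z)).
apply: ip_sep => z.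
by rewrite -e1 hsY hsX e2 -hsY.
Qed.

Lemma RangeOf_Pk X n (v : 'I_n -> V) : RangeOf X v -> lin_indep v -> Pk ip n X.
Proof.
move=> [hX hsp hf] hv; split; first exact: isproj_projection.
exists v; split => // i; by exists (v i).
Qed.

Lemma Pk_RangeOf X k : Pk ip k X -> exists v : 'I_k -> V, lin_indep v /\ RangeOf X v.
Proof.
move=> [hp [v [hv1 hv2 hv3]]]; exists v; split => //; split => //.
- exact: projection_isproj.
- by move=> i; have [x <-] := hv2 i; case: hp => _ _ ->.
Qed.

Lemma indep_lift n (c : 'I_n.+1 -> V) (i : 'I_n.+1) :
  lin_indep c -> lin_indep (fun j => c (lift i j)).
Proof.
move=> hc d hd j.
have := hc (glue i 0 d); rewrite (sum_lift i) glue_i scale0r add0r.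
under eq_bigr do rewrite glue_lift.
by move=> /(_ hd (lift i j)); rewrite glue_lift.
Qed.

Section Ext.
Variables (G : V -> V) (n : nat) (g : 'I_n -> V).
Hypothesis hG : RangeOf G g.
Let hl : lin G. Proof. by case: hG => [[]]. Qed.
Let hs : selfadjoint ip G. Proof. by case: hG => [[]]. Qed.
Let hi : forall x, G (G x) = G x. Proof. by case: hG => [[]]. Qed.

Lemma ext_nonzero (c : 'I_n.+1 -> V) (i : 'I_n.+1) :
  lin_indep c -> (forall j, c (lift i j) = g j) -> c i - G (c i) != 0.
Proof.
move=> hc hcg; apply/negP; rewrite subr_eq0 => /eqP e.
case: hG => _ hsp _.
have [d hd] := hsp (c i).
have := hc (glue i (-1) (fun j => d j)).
rewrite (sum_lift i) glue_i.
under eq_bigr do rewrite glue_lift hcg.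
rewrite -hd -e scaleN1r addNr => /(_ erefl i).
rewrite glue_i => /eqP; by rewrite oppr_eq0 oner_eq0.
Qed.

Variable a : V.
Let a' := a - G a.
Hypothesis ha : a' != 0.

Let Ga' : G a' = 0. Proof. by rewrite /a' (LAB hl) hi subrr. Qed.
Let ipGa' x : ip (G x) a' = 0. Proof. by rewrite hs Ga' (ip0r hip). Qed.

Definition extX := fun x => G x + pw a' x.

Lemma extX_proj : isproj ip extX.
Proof.
split.
- move=> b x y; rewrite /extX hl pw_lin scalerDr -!addrA; congr (_ + _).
  by rewrite addrCA.
- by move=> x y; rewrite /extX (ipDl hip) (ipDr hip) hs pw_sa.
- move=> x; rewrite /extX (LAD hl) (LAD (@pw_lin a')) hi (pw_orth (ipGa' x)) add0r.
  have -> : G (pw a' x) = 0 by rewrite /pw (LAZ hl) Ga' scaler0.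
  have -> : pw a' (pw a' x) = pw a' x by rewrite {2}/pw pw_scale pw_w.
  by rewrite addr0.
Qed.

Lemma extX_range (c : 'I_n.+1 -> V) (i : 'I_n.+1) :
  (forall j, c (lift i j) = g j) -> c i = a -> RangeOf extX c.
Proof.
move=> hcg hca; case: hG => _ hsp hf.
have hsub : forall y, in_span g y -> in_span c y.
  move=> y hy; apply: (span_trans hy) => j; rewrite -hcg; exact: span_gen.
split.
- exact: extX_proj.
- move=> x; rewrite /extX /pw /a'; apply: spanD; first exact: hsub.
  apply: spanZ; apply: spanB; first by rewrite -hca; apply: span_gen.
  exact: hsub.
- apply: (@ord_case_lift _ i (fun l => extX (c l) = c l)).
    rewrite hca /extX.
    have -> : pw a' a = a'.
      have -> : a = a' + G a by rewrite /a' subrK.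
      by rewrite (LAD (@pw_lin a')) pw_w // (pw_orth (ipGa' a)) addr0.
    by rewrite /a' addrC subrK.
  move=> j; rewrite hcg /extX hf pw_orth ?addr0 //.
  by rewrite -hf ipGa'.
Qed.

End Ext.

Lemma zero_range : RangeOf (fun _ => 0) (fun i : 'I_0 => 0).
Proof.
split.
- split.
  + by move=> b x y; rewrite scaler0 addr0.
  + by move=> x y; rewrite (ip0l hip) (ip0r hip).
  + by [].
- by move=> x; apply: span0.
- by case.
Qed.

Lemma exists_range n (v : 'I_n -> V) : lin_indep v -> exists X, RangeOf X v.
Proof.
elim: n v => [|n IH] v hv.
  exists (fun _ => 0); have -> : v = (fun i : 'I_0 => 0).
    by apply: FunctionalExtensionality.functional_extensionality; case.
  exact: zero_range.
have [G hG] := IH _ (indep_lift (i:=ord_max) hv).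
have hne := ext_nonzero hG hv (fun j => erefl).
by exists (extX G (v ord_max)); apply: (extX_range hG hne (i := ord_max)).
Qed.

End HSide.

Section Ineq.
Variable R : realType.
Definition al (s : R) := (1 - s) / (1 + s ^+ 2).
Definition be (s : R) := (s ^+ 2 - s) / (1 + s ^+ 2).
Definition ga (s : R) := (2 * s) / (1 + s ^+ 2).
Lemma D_gt0 (s : R) : 0 < 1 + s ^+ 2. Proof. nra. Qed.
Lemma divlt (x D N : R) : 0 < D -> x < N * D -> x / D < N.
Proof. by move=> hD h; rewrite ltr_pdivrMr. Qed.

Lemma pb_pos (c r N : R) : 0 <= r <= N -> 0 <= c -> 0 <= c * r /\ c * r <= c * N.
Proof. move=> /andP [h1 h2] hc; split; [exact: mulr_ge0 | exact: ler_wpM2l]. Qed.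
Lemma pb_neg (c r N : R) : 0 <= r <= N -> c <= 0 -> c * N <= c * r /\ c * r <= 0.
Proof.
move=> /andP [h1 h2] hc; split; first by rewrite ler_wnM2l.
by rewrite mulr_le0_ge0.
Qed.

Definition close_cond (a0 a1 a2 b0 b1 b2 : R) :=
  forall r0 r1 r2 N : R, 0 < N -> 0 <= r0 <= N -> 0 <= r1 <= N -> 0 <= r2 <= N ->
  (a0 - b0) * r0 + (a1 - b1) * r1 + (a2 - b2) * r2 < N /\
  (b0 - a0) * r0 + (b1 - a1) * r1 + (b2 - a2) * r2 < N.

Lemma ineq0 (s : R) : 0 <= s <= 1/2 -> close_cond (al s) (be s) (ga s) 1 0 0.
Proof.
move=> /andP [hs1 hs2] r0 r1 r2 N hN h0 h1 h2.
have hD := D_gt0 s. have hD' : 1 + s ^+ 2 != 0 by rewrite gt_eqF.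
have hq : 0 < N * (1 - s)^+2 by apply: mulr_gt0 => //; apply: exprn_gt0; lra.
rewrite /al /be /ga; split.
  have -> : ((1 - s) / (1 + s ^+ 2) - 1) * r0 + ((s ^+ 2 - s) / (1 + s ^+ 2) - 0) * r1 + (2 * s / (1 + s ^+ 2) - 0) * r2
    = ((- s - s^+2) * r0 + (s ^+ 2 - s) * r1 + (2 * s) * r2) / (1 + s ^+ 2) by field.
  apply: divlt => //.
  have hcc1 : - s - s^+2 <= 0 by nra.
  have [ha _] := pb_neg h0 hcc1.
  have hcc2 : s^+2 - s <= 0 by nra.
  have [_ hb] := pb_neg h1 hcc2.
  have hcc3 : 0 <= 2 * s by nra.
  have [_ hc] := pb_pos h2 hcc3.
  nra.
have -> : (1 - (1 - s) / (1 + s ^+ 2)) * r0 + (0 - (s ^+ 2 - s) / (1 + s ^+ 2)) * r1 + (0 - 2 * s / (1 + s ^+ 2)) * r2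
    = ((s + s^+2) * r0 + (s - s ^+ 2) * r1 + (- (2 * s)) * r2) / (1 + s ^+ 2) by field.
apply: divlt => //.
have hcc4 : 0 <= s + s^+2 by nra.
have [_ ha] := pb_pos h0 hcc4.
have hcc5 : 0 <= s - s^+2 by nra.
have [_ hb] := pb_pos h1 hcc5.
have hcc6 : - (2 * s) <= 0 by nra.
have [_ hc] := pb_neg h2 hcc6.
nra.
Qed.

Lemma ineq1 (s : R) : 1/2 <= s <= 2 -> close_cond (al s) (be s) (ga s) 0 0 1.
Proof.
move=> /andP [hs1 hs2] r0 r1 r2 N hN h0 h1 h2.
have hD := D_gt0 s. have hD' : 1 + s ^+ 2 != 0 by rewrite gt_eqF.
rewrite /al /be /ga; split.
  have -> : ((1 - s) / (1 + s ^+ 2) - 0) * r0 + ((s ^+ 2 - s) / (1 + s ^+ 2) - 0) * r1 + (2 * s / (1 + s ^+ 2) - 1) * r2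
    = ((1 - s) * r0 + (s ^+ 2 - s) * r1 + (- (1 - s)^+2) * r2) / (1 + s ^+ 2) by field.
  apply: divlt => //.
  have hcc7 : - (1 - s)^+2 <= 0 by rewrite oppr_le0 sqr_ge0.
  have [_ hc] := pb_neg h2 hcc7.
  case: (lerP s 1) => hs.
    have hcc8 : 0 <= 1 - s by nra.
    have [_ ha] := pb_pos h0 hcc8.
    have hcc9 : s^+2 - s <= 0 by nra.
    have [_ hb] := pb_neg h1 hcc9.
    nra.
  have hcc10 : 1 - s <= 0 by nra.
  have [_ ha] := pb_neg h0 hcc10.
  have hcc11 : 0 <= s^+2 - s by nra.
  have [_ hb] := pb_pos h1 hcc11.
  nra.
have -> : (0 - (1 - s) / (1 + s ^+ 2)) * r0 + (0 - (s ^+ 2 - s) / (1 + s ^+ 2)) * r1 + (1 - 2 * s / (1 + s ^+ 2)) * r2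
    = ((s - 1) * r0 + (s - s ^+ 2) * r1 + ((1 - s)^+2) * r2) / (1 + s ^+ 2) by field.
apply: divlt => //.
have hcc12 : 0 <= (1 - s)^+2 by rewrite sqr_ge0.
have [_ hc] := pb_pos h2 hcc12.
case: (lerP s 1) => hs.
  have hcc13 : s - 1 <= 0 by nra.
  have [_ ha] := pb_neg h0 hcc13.
  have hcc14 : 0 <= s - s^+2 by nra.
  have [_ hb] := pb_pos h1 hcc14.
  nra.
have hcc15 : 0 <= s - 1 by nra.
have [_ ha] := pb_pos h0 hcc15.
have hcc16 : s - s^+2 <= 0 by nra.
have [_ hb] := pb_neg h1 hcc16.
nra.
Qed.

Lemma ineqI (s : R) : 2 <= s -> close_cond (al s) (be s) (ga s) 0 1 0.
Proof.
move=> hs r0 r1 r2 N hN h0 h1 h2.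
have hD := D_gt0 s. have hD' : 1 + s ^+ 2 != 0 by rewrite gt_eqF.
have hq : 0 < N * (1 - s)^+2 by apply: mulr_gt0 => //; rewrite expr2; nra.
rewrite /al /be /ga; split.
  have -> : ((1 - s) / (1 + s ^+ 2) - 0) * r0 + ((s ^+ 2 - s) / (1 + s ^+ 2) - 1) * r1 + (2 * s / (1 + s ^+ 2) - 0) * r2
    = ((1 - s) * r0 + (- (1 + s)) * r1 + (2 * s) * r2) / (1 + s ^+ 2) by field.
  apply: divlt => //.
  have hcc17 : 1 - s <= 0 by nra.
  have [_ ha] := pb_neg h0 hcc17.
  have hcc18 : - (1 + s) <= 0 by nra.
  have [_ hb] := pb_neg h1 hcc18.
  have hcc19 : 0 <= 2 * s by nra.
  have [_ hc] := pb_pos h2 hcc19.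
  nra.
have -> : (0 - (1 - s) / (1 + s ^+ 2)) * r0 + (1 - (s ^+ 2 - s) / (1 + s ^+ 2)) * r1 + (0 - 2 * s / (1 + s ^+ 2)) * r2
    = ((s - 1) * r0 + (1 + s) * r1 + (- (2 * s)) * r2) / (1 + s ^+ 2) by field.
apply: divlt => //.
have hcc20 : 0 <= s - 1 by nra.
have [_ ha] := pb_pos h0 hcc20.
have hcc21 : 0 <= 1 + s by nra.
have [_ hb] := pb_pos h1 hcc21.
have hcc22 : - (2 * s) <= 0 by nra.
have [_ hc] := pb_neg h2 hcc22.
nra.
Qed.

End Ineq.

Section FsComb.
Variables (R : realType) (V : lmodType R[i]) (ip : V -> V -> R[i]).
Hypothesis hip : inner_product ip.

Lemma Re_ipZZ (a : R) x : ReC (ip (a%:C *: x) (a%:C *: x)) = a ^+ 2 * ReC (ip x x).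
Proof. by rewrite (ipZl hip) (ipZr hip) conjc_real mulrA -rmorphM ReMr expr2. Qed.

Lemma parallel_le x y : ReC (ip (x + y) (x + y)) <= 2 * (ReC (ip x x) + ReC (ip y y)).
Proof.
have e : ip (x + y) (x + y) + ip (x - y) (x - y) = 2%:R * (ip x x + ip y y).
  rewrite !(ipDl hip) !(ipNl hip) !(ipDr hip) !(ipNr hip); ring.
have := Re_ipxx_ge0 hip (x - y).
have := congr1 (@complex.Re R) e; rewrite ReD (_ : (2%:R : R[i]) = (2%:R : R)%:C) ?ReMr ?ReD; last by rewrite rmorphMn rmorph1.
move=> e2 h; lra.
Qed.

Lemma hnorm_sq x : hnorm ip x ^+ 2 = ReC (ip x x).
Proof. by rewrite /hnorm sqr_sqrtr // Re_ipxx_ge0. Qed.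

Lemma Fs_comb (a b : R) A B : Fs ip A -> Fs ip B ->
  Fs ip (fun x => a%:C *: A x + b%:C *: B x).
Proof.
move=> [[hlA [CA hCA]] hsA [n1 [w1 hw1]]] [[hlB [CB hCB]] hsB [n2 [w2 hw2]]].
split.
- split.
  + move=> c x y; rewrite hlA hlB !scalerDr !scalerA [c * a%:C]mulrC [c * b%:C]mulrC.
    by rewrite addrACA.
  + exists (Num.sqrt (2 * (a ^+ 2 * CA ^+ 2 + b ^+ 2 * CB ^+ 2))) => x.
    have hx := Re_ipxx_ge0 hip x.
    have hA2 : ReC (ip (A x) (A x)) <= CA ^+ 2 * ReC (ip x x).
      rewrite -!hnorm_sq; have := hCA x; have := sqrtr_ge0 (ReC (ip (A x) (A x))).
      rewrite /hnorm => h1 h2; rewrite -exprMn; nra.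
    have hB2 : ReC (ip (B x) (B x)) <= CB ^+ 2 * ReC (ip x x).
      rewrite -!hnorm_sq; have := hCB x; have := sqrtr_ge0 (ReC (ip (B x) (B x))).
      rewrite /hnorm => h1 h2; rewrite -exprMn; nra.
    rewrite /hnorm -sqrtrM; last by apply: mulr_ge0 => //; apply: addr_ge0; apply: mulr_ge0; apply: sqr_ge0.
    rewrite ler_sqrt; last by apply: mulr_ge0; [apply: mulr_ge0 => //; apply: addr_ge0; apply: mulr_ge0; apply: sqr_ge0|].
    apply: (le_trans (parallel_le _ _)); rewrite !Re_ipZZ.
    have ha2 := sqr_ge0 a; have hb2 := sqr_ge0 b.
    have h1 : a ^+ 2 * ReC (ip (A x) (A x)) <= a ^+ 2 * (CA ^+ 2 * ReC (ip x x)) by apply: ler_wpM2l.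
    have h2 : b ^+ 2 * ReC (ip (B x) (B x)) <= b ^+ 2 * (CB ^+ 2 * ReC (ip x x)) by apply: ler_wpM2l.
    nra.
- move=> x y; rewrite (ipDl hip) !(ipZl hip) (ipDr hip) !(ipZr hip) !conjc_real.
  by rewrite hsA hsB.
- exists (n1 + n2)%N, (fun l => match split l with inl i => w1 i | inr j => w2 j end) => x.
  have s1 : forall i, in_span (fun l => match split l with inl i => w1 i | inr j => w2 j end) (w1 i).
    move=> i; have := span_gen (fun l => match split l with inl i => w1 i | inr j => w2 j end) (unsplit (inl i)).
    by rewrite unsplitK.
  have s2 : forall j, in_span (fun l => match split l with inl i => w1 i | inr j => w2 j end) (w2 j).
    move=> j; have := span_gen (fun l => match split l with inl i => w1 i | inr j => w2 j end) (unsplit (inr j)).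
    by rewrite unsplitK.
  apply: spanD; apply: spanZ; [exact: span_trans (hw1 x) s1 | exact: span_trans (hw2 x) s2].
Qed.

Lemma Pk_Fs X n : Pk ip n X -> Fs ip X.
Proof.
move=> [[hb hs _] [v [_ _ hv]]]; split => //.
by exists n, v.
Qed.

End FsComb.

Section NormL.
Variables (R : realType) (V : lmodType R[i]) (ip : V -> V -> R[i]).
Hypothesis hip : inner_product ip.

Lemma ipxx_ne0 w : w != 0 -> ip w w != 0.
Proof. by move=> hw; apply/eqP => h; move/eqP: hw; apply; apply: (ipxx_eq0 hip). Qed.

Lemma pw_scaleinv w (c : R[i]) : c != 0 -> w != 0 -> pw ip (c *: w) = pw ip w.
Proof.
move=> hc hw; apply: FunctionalExtensionality.functional_extensionality => x.
rewrite /pw (ipZr hip) (ipZl hip) (ipZr hip) scalerA; congr (_ *: _).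
have hN := ipxx_ne0 hw.
have hc' : conjc c != 0 by rewrite conjc_eq0.
field; apply/and3P; split => //.
Qed.

Definition nrm w := ((hnorm ip w)^-1)%:C *: w.

Lemma hnorm_gt0 w : w != 0 -> 0 < hnorm ip w.
Proof. by move=> hw; rewrite /hnorm sqrtr_gt0 (Re_ipxx_gt0 hip hw). Qed.

Lemma nrm_ip w : w != 0 -> ip (nrm w) (nrm w) = 1.
Proof.
move=> hw; have hn := hnorm_gt0 hw.
have hsq := hnorm_sq hip w.
rewrite /nrm (ipZl hip) (ipZr hip) conjc_real (ipxx_Re hip) -!rmorphM.
rewrite -hsq -[1]/(1%:C); congr (_%:C); field.
by rewrite gt_eqF.
Qed.

Lemma nrm_scale w : w != 0 -> w = (hnorm ip w)%:C *: nrm w.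
Proof.
move=> hw; have hn := hnorm_gt0 hw.
by rewrite /nrm scalerA -rmorphM mulfV ?gt_eqF // scale1r.
Qed.

Lemma nrm_ne0 w : w != 0 -> nrm w != 0.
Proof.
move=> hw; apply/eqP => h; move/eqP: (hw); apply.
by rewrite (nrm_scale hw) h scaler0.
Qed.

Lemma pw_nrm w : w != 0 -> pw ip (nrm w) = pw ip w.
Proof.
move=> hw; apply: pw_scaleinv => //.
rewrite (_ : 0 = 0%:C) // (inj_eq (@complexI _)) invr_eq0 gt_eqF //.
exact: hnorm_gt0.
Qed.

End NormL.

Section Repl.
Variables (R : realType) (V : lmodType R[i]).

Definition replv n (c : 'I_n -> V) (i : 'I_n) (a : V) : 'I_n -> V :=
  fun j => if j == i then a else c j.

Lemma sum_replv n (c : 'I_n -> V) i a (mu : 'I_n -> R[i]) :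
  \sum_l mu l *: replv c i a l = mu i *: a + \sum_(l | l != i) mu l *: c l.
Proof.
rewrite (bigD1 i) //= /replv eqxx; congr (_ + _).
by apply: eq_bigr => l /negbTE ->.
Qed.

Lemma sum_skip n (c : 'I_n -> V) i (mu : 'I_n -> R[i]) :
  \sum_l (if l == i then 0 else mu l) *: c l = \sum_(l | l != i) mu l *: c l.
Proof.
rewrite (bigD1 i) //= eqxx scale0r add0r.
by apply: eq_bigr => l /negbTE ->.
Qed.

Lemma sum_sep n (c : 'I_n -> V) i (mu : 'I_n -> R[i]) :
  \sum_l mu l *: c l = mu i *: c i + \sum_(l | l != i) mu l *: c l.
Proof. by rewrite (bigD1 i). Qed.

Lemma indep_repl_out n (c : 'I_n -> V) i a :
  lin_indep c -> ~ in_span c a -> lin_indep (replv c i a).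
Proof.
move=> hc ha mu; rewrite sum_replv => hs.
have hmi : mu i = 0.
  case: (Classical_Prop.classic (mu i = 0)) => // hne; case: ha.
  have -> : a = - (mu i)^-1 *: \sum_(l | l != i) mu l *: c l.
    apply: (scalerI (a := mu i)); first by apply/eqP.
    rewrite scalerA mulrN mulfV ?scaleN1r; last by apply/eqP.
    by apply/eqP; rewrite -addr_eq0 hs.
  apply: spanZ; apply: span_sum => l _; apply: spanZ; exact: span_gen.
have hs' : \sum_l mu l *: c l = 0 by rewrite (sum_sep _ i) hmi scale0r add0r; move: hs; rewrite hmi scale0r add0r.
exact: hc _ hs'.
Qed.

Lemma exchange n (c : 'I_n -> V) i (lam : 'I_n -> R[i]) a :
  lin_indep c -> a = \sum_l lam l *: c l -> lam i != 0 -> lin_indep (replv c i a).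
Proof.
move=> hc ha hli mu; rewrite sum_replv => hs.
pose nu := fun l => mu i * lam l + (if l == i then 0 else mu l).
have hnu : \sum_l nu l *: c l = 0.
  rewrite /nu; under eq_bigr do rewrite scalerDl.
  rewrite big_split /= sum_skip -[RHS]hs ha scaler_sumr; congr (_ + _).
  by apply: eq_bigr => l _; rewrite scalerA.
have h0 := hc _ hnu.
have hmi : mu i = 0.
  have := h0 i; rewrite /nu eqxx addr0 => /eqP; rewrite mulf_eq0 (negbTE hli) orbF.
  by move/eqP.
move=> l; case: (eqVneq l i) => [->|hl] //.
by have := h0 l; rewrite /nu hmi mul0r add0r (negbTE hl).
Qed.

Section Swap.
Variables (n : nat) (sg : 'I_n -> 'I_n).
Hypothesis hsg : forall m, sg (sg m) = m.
Let sg_inj : injective sg. Proof. exact: (can_inj hsg). Qed.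

Lemma indep_swap (c : 'I_n -> V) : lin_indep c -> lin_indep (fun m => c (sg m)).
Proof.
move=> hc mu hs.
have : \sum_l mu (sg l) *: c l = 0.
  by rewrite (reindex_inj sg_inj) /=; under eq_bigr do rewrite hsg.
move/hc => h m; by have := h (sg m); rewrite hsg.
Qed.

Lemma span_swap (c : 'I_n -> V) y : in_span c y -> in_span (fun m => c (sg m)) y.
Proof.
move=> [d ->]; exists (fun m => d (sg m)).
by rewrite (reindex_inj sg_inj).
Qed.

End Swap.
End Repl.

Section Phi.
Variables (R : realType) (H K : lmodType R[i]) (ipH : H -> H -> R[i]) (ipK : K -> K -> R[i]).
Hypotheses (hH : inner_product ipH) (hK : inner_product ipK).
Variable phi : (H -> H) -> (K -> K).
Hypothesis hphi : Fs_linear ipH ipK phi.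
Variable k : nat.
Hypothesis hPf : forall P, Pk ipH k P -> Pf ipK (phi P).

Definition Same (X Y : H -> H) := forall m, Pk ipK m (phi X) <-> Pk ipK m (phi Y).

Lemma same_refl X : Same X X. Proof. by []. Qed.
Lemma same_sym X Y : Same X Y -> Same Y X.
Proof. by move=> h m; split => /h. Qed.
Lemma same_trans X Y Z : Same X Y -> Same Y Z -> Same X Z.
Proof. by move=> h1 h2 m; split => [/h1/h2|/h2/h1]. Qed.

Lemma phi3 X0 X1 X2 (c0 c1 c2 : R) : Fs ipH X0 -> Fs ipH X1 -> Fs ipH X2 ->
  phi (fun x => c0%:C *: X0 x + (c1%:C *: X1 x + c2%:C *: X2 x)) =
  (fun y => c0%:C *: phi X0 y + (c1%:C *: phi X1 y + c2%:C *: phi X2 y)).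
Proof.
move=> h0 h1 h2.
have hin := Fs_comb hH c1 c2 h1 h2.
have -> : (fun x => c0%:C *: X0 x + (c1%:C *: X1 x + c2%:C *: X2 x)) =
  (fun x => c0%:C *: X0 x + 1%:C *: (fun x => c1%:C *: X1 x + c2%:C *: X2 x) x).
  by apply: FunctionalExtensionality.functional_extensionality => x; rewrite rmorph1 scale1r.
case: hphi => _ hl; rewrite (hl _ _ _ _ h0 hin) (hl _ _ _ _ h1 h2).
by apply: FunctionalExtensionality.functional_extensionality => y; rewrite rmorph1 scale1r.
Qed.

Lemma phi_isproj X : Pk ipH k X -> isproj ipK (phi X).
Proof. by move=> /hPf [hp _]; apply: projection_isproj. Qed.

Lemma same_inj X Y : Pk ipH k X -> Pk ipH k Y ->
  (forall y, phi X y = y -> phi Y y = 0 -> y = 0) ->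
  (forall y, phi Y y = y -> phi X y = 0 -> y = 0) -> Same X Y.
Proof.
move=> hX hY i1 i2.
have [mX rX] := rank_of_Pf (hPf hX).
have [mY rY] := rank_of_Pf (hPf hY).
have pX := phi_isproj hX; have pY := phi_isproj hY.
have l1 := rank_le pX pY rX rY i1.
have l2 := rank_le pY pX rY rX i2.
have e : mX = mY by apply/eqP; rewrite eqn_leq l1 l2.
move=> m; split.
- move=> [_ r]; split; first by case: (hPf hY).
  have a := rank_le pX pY r rY i1; have b := rank_le pY pX rY r i2.
  have -> : m = mY by apply/eqP; rewrite eqn_leq a b.
  exact: rY.
- move=> [_ r]; split; first by case: (hPf hX).
  have a := rank_le pY pX r rX i2; have b := rank_le pX pY rX r i1.
  have -> : m = mX by apply/eqP; rewrite eqn_leq a b.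
  exact: rX.
Qed.

Lemma same_close X Y Z0 Z1 Z2 (a0 a1 a2 b0 b1 b2 : R) :
  Pk ipH k X -> Pk ipH k Y -> Pk ipH k Z0 -> Pk ipH k Z1 -> Pk ipH k Z2 ->
  (forall y, phi X y = a0%:C *: phi Z0 y + (a1%:C *: phi Z1 y + a2%:C *: phi Z2 y)) ->
  (forall y, phi Y y = b0%:C *: phi Z0 y + (b1%:C *: phi Z1 y + b2%:C *: phi Z2 y)) ->
  close_cond a0 a1 a2 b0 b1 b2 -> Same X Y.
Proof.
move=> hX hY h0 h1 h2 eX eY hc.
have p0 := phi_isproj h0; have p1 := phi_isproj h1; have p2 := phi_isproj h2.
apply: same_inj => //.
- apply: (closeK hK p0 p1 p2 eX eY) => r0 r1 r2 N hN q0 q1 q2.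
  by case: (hc r0 r1 r2 N hN q0 q1 q2).
- apply: (closeK hK p0 p1 p2 eY eX) => r0 r1 r2 N hN q0 q1 q2.
  by case: (hc r0 r1 r2 N hN q0 q1 q2).
Qed.


Section Rot.
Variables (G : H -> H).
Hypothesis hGp : isproj ipH G.
Hypothesis hGk : forall w, w != 0 -> G w = 0 -> Pk ipH k (fun x => G x + pw ipH w x).
Let hGl : lin G. Proof. by case: hGp. Qed.

Definition Xw w := fun x => G x + pw ipH w x.

Lemma ne0_of_ip w (c : R[i]) : ipH w w = c -> c != 0 -> w != 0.
Proof. by move=> e hc; apply/eqP => hw; move: hc; rewrite -e hw (ip0l hH) eqxx. Qed.

Section Orth.
Variables u v : H.
Hypotheses (huu : ipH u u = 1) (hvv : ipH v v = 1) (huv : ipH u v = 0).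
Hypotheses (hGu : G u = 0) (hGv : G v = 0).
Let hvu : ipH v u = 0. Proof. by rewrite (ipC hH) huv conjc0. Qed.

Definition vs (s : R) := u + s%:C *: v.

Lemma ip_vs s : ipH (vs s) (vs s) = (1 + s ^+ 2)%:C.
Proof.
rewrite /vs !(ipDl hH) !(ipDr hH) !(ipZl hH) !(ipZr hH) huu hvv huv hvu conjc_real.
rewrite rmorphD rmorph1 rmorphXn; ring.
Qed.

Lemma ip_uv2 : ipH (u + v) (u + v) = 2.
Proof. rewrite !(ipDl hH) !(ipDr hH) huu hvv huv hvu; ring. Qed.

Let one_ne0 : (1 : R[i]) != 0. Proof. exact: oner_neq0. Qed.
Let two_ne0 : (2 : R[i]) != 0. Proof. by rewrite pnatr_eq0. Qed.
Let D_ne0 s : (1 + s ^+ 2)%:C != 0 :> R[i].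
Proof. rewrite (_ : 0 = 0%:C) // (inj_eq (@complexI _)). by rewrite gt_eqF // D_gt0. Qed.

Lemma Pk_vs s : Pk ipH k (Xw (vs s)).
Proof.
apply: hGk; first exact: (ne0_of_ip (ip_vs s) (D_ne0 s)).
by rewrite /vs (LAD hGl) (LAZ hGl) hGu hGv scaler0 addr0.
Qed.
Lemma Pk_u : Pk ipH k (Xw u).
Proof. by apply: hGk => //; exact: (ne0_of_ip huu one_ne0). Qed.
Lemma Pk_v : Pk ipH k (Xw v).
Proof. by apply: hGk => //; exact: (ne0_of_ip hvv one_ne0). Qed.
Lemma Pk_uv : Pk ipH k (Xw (u + v)).
Proof.
apply: hGk; first exact: (ne0_of_ip ip_uv2 two_ne0).
by rewrite (LAD hGl) hGu hGv addr0.
Qed.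

Definition cb (g : H) (k0 k1 k2 : R[i]) := k0 *: g + k1 *: u + k2 *: v.
Lemma cb_add g a0 a1 a2 b0 b1 b2 : cb g a0 a1 a2 + cb g b0 b1 b2 = cb g (a0 + b0) (a1 + b1) (a2 + b2).
Proof. by rewrite /cb !scalerDl addrACA [X in X + _ = _]addrACA. Qed.
Lemma cb_scale g c a0 a1 a2 : c *: cb g a0 a1 a2 = cb g (c * a0) (c * a1) (c * a2).
Proof. by rewrite /cb !scalerDr !scalerA. Qed.

Lemma Xu_cb x : Xw u x = cb (G x) 1 (ipH x u) 0.
Proof. by rewrite /Xw /pw /cb huu divr1 scale1r scale0r addr0. Qed.
Lemma Xv_cb x : Xw v x = cb (G x) 1 0 (ipH x v).
Proof. by rewrite /Xw /pw /cb hvv divr1 scale1r scale0r addr0. Qed.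
Lemma Xuv_cb x : Xw (u + v) x = cb (G x) 1 ((ipH x u + ipH x v) / 2) ((ipH x u + ipH x v) / 2).
Proof. by rewrite /Xw /pw /cb ip_uv2 scale1r (ipDr hH) scalerDr addrA. Qed.
Lemma Xs_cb s x : Xw (vs s) x = cb (G x) 1 ((ipH x u + s%:C * ipH x v) / (1 + s ^+ 2)%:C)
   ((ipH x u + s%:C * ipH x v) / (1 + s ^+ 2)%:C * s%:C).
Proof.
rewrite /Xw /pw /cb ip_vs scale1r {1}/vs (ipDr hH) (ipZr hH) conjc_real.
by rewrite /vs scalerDr scalerA addrA.
Qed.

Lemma rmorphD_C s : (1 + s%:C ^+ 2) = (1 + s ^+ 2)%:C :> R[i].
Proof. by rewrite rmorphD rmorph1 rmorphXn. Qed.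
Lemma alC s : (al s)%:C = (1 - s%:C) / (1 + s%:C ^+ 2) :> R[i].
Proof. by rewrite /al fmorph_div rmorphB rmorphD rmorph1 rmorphXn. Qed.
Lemma beC s : (be s)%:C = (s%:C ^+ 2 - s%:C) / (1 + s%:C ^+ 2) :> R[i].
Proof. by rewrite /be fmorph_div rmorphB rmorphD rmorph1 !rmorphXn. Qed.
Lemma gaC s : (ga s)%:C = (2 * s%:C) / (1 + s%:C ^+ 2) :> R[i].
Proof. by rewrite /ga fmorph_div ?rmorphM ?rmorphD ?rmorph1 ?rmorphXn. Qed.

Lemma X_rep s : Xw (vs s) =
  (fun x => (al s)%:C *: Xw u x + ((be s)%:C *: Xw v x + (ga s)%:C *: Xw (u + v) x)).
Proof.
apply: FunctionalExtensionality.functional_extensionality => x.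
rewrite Xs_cb Xu_cb Xv_cb Xuv_cb !cb_scale !cb_add.
have hD := D_ne0 s.
rewrite alC beC gaC; rewrite -(rmorphD_C s) in hD.
move: hD; set S := s%:C; set p := ipH x u; set q := ipH x v => hD.
rewrite /cb; congr (_ *: _ + _ *: _ + _ *: _).
all: field => //.
Qed.

Let Fu := Pk_Fs Pk_u.
Let Fv := Pk_Fs Pk_v.
Let Fuv := Pk_Fs Pk_uv.

Lemma phi_rep s y : phi (Xw (vs s)) y =
  (al s)%:C *: phi (Xw u) y + ((be s)%:C *: phi (Xw v) y + (ga s)%:C *: phi (Xw (u + v)) y).
Proof. by rewrite X_rep (phi3 _ _ _ Fu Fv Fuv). Qed.

Lemma rep_u y : phi (Xw u) y =
  1%:C *: phi (Xw u) y + (0%:C *: phi (Xw v) y + 0%:C *: phi (Xw (u + v)) y).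
Proof. by rewrite rmorph1 rmorph0 scale1r !scale0r !addr0. Qed.
Lemma rep_v y : phi (Xw v) y =
  0%:C *: phi (Xw u) y + (1%:C *: phi (Xw v) y + 0%:C *: phi (Xw (u + v)) y).
Proof. by rewrite rmorph1 rmorph0 scale1r !scale0r add0r addr0. Qed.
Lemma rep_uv y : phi (Xw (u + v)) y =
  0%:C *: phi (Xw u) y + (0%:C *: phi (Xw v) y + 1%:C *: phi (Xw (u + v)) y).
Proof. by rewrite rmorph1 rmorph0 scale1r !scale0r !add0r. Qed.

Lemma same_s_u s : 0 <= s <= 1/2 -> Same (Xw (vs s)) (Xw u).
Proof. move=> hs; exact: (same_close (Pk_vs s) Pk_u Pk_u Pk_v Pk_uv (phi_rep s) rep_u (ineq0 hs)). Qed.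
Lemma same_s_uv s : 1/2 <= s <= 2 -> Same (Xw (vs s)) (Xw (u + v)).
Proof. move=> hs; exact: (same_close (Pk_vs s) Pk_uv Pk_u Pk_v Pk_uv (phi_rep s) rep_uv (ineq1 hs)). Qed.
Lemma same_s_v s : 2 <= s -> Same (Xw (vs s)) (Xw v).
Proof. move=> hs; exact: (same_close (Pk_vs s) Pk_v Pk_u Pk_v Pk_uv (phi_rep s) rep_v (ineqI hs)). Qed.

Lemma same_uv_u : Same (Xw (u + v)) (Xw u).
Proof.
apply: (same_trans (same_sym (same_s_uv (s := 1/2) _))); first by apply/andP; split; lra.
by apply: same_s_u; apply/andP; split; lra.
Qed.

Lemma same_v_u : Same (Xw v) (Xw u).
Proof.
apply: (same_trans (same_sym (same_s_v (s := 2) _))); first by lra.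
apply: (same_trans (same_s_uv (s := 2) _)); first by apply/andP; split; lra.
exact: same_uv_u.
Qed.

Lemma rot s : 0 <= s -> Same (Xw (vs s)) (Xw u).
Proof.
move=> hs; case: (lerP s (1/2)) => h1.
  by apply: same_s_u; apply/andP; split.
case: (lerP s 2) => h2.
  apply: (same_trans (same_s_uv _)); last exact: same_uv_u.
  by apply/andP; split => //; apply: ltW.
apply: (same_trans (same_s_v (ltW h2))); exact: same_v_u.
Qed.

End Orth.

Lemma two_dim a b : a != 0 -> b != 0 -> G a = 0 -> G b = 0 -> Same (Xw a) (Xw b).
Proof.
move=> ha hb hGa hGb.
set u := nrm ipH a.
have hu : u != 0 := nrm_ne0 hH ha.
have huu : ipH u u = 1 := nrm_ip hH ha.
have hGu : G u = 0 by rewrite /u /nrm (LAZ hGl) hGa scaler0.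
have -> : Xw a = Xw u by rewrite /Xw /u (pw_nrm hH ha).
set c := ipH b u.
set b2 := b - c *: u.
have hb2u : ipH b2 u = 0 by rewrite /b2 (ipBl hH) (ipZl hH) huu mulr1 subrr.
have hGb2 : G b2 = 0 by rewrite /b2 (LAB hGl) (LAZ hGl) hGb hGu scaler0 subrr.
have hperp : forall z, ipH z u = 0 -> ipH u (nrm ipH z) = 0.
  by move=> z hz; rewrite /nrm (ipZr hH) (ipC hH z) hz conjc0 mulr0.
have hGn : forall z, G z = 0 -> G (nrm ipH z) = 0.
  by move=> z hz; rewrite /nrm (LAZ hGl) hz scaler0.
case: (eqVneq b2 0) => hb20.
  have eb : b = c *: u by apply/eqP; rewrite -subr_eq0; apply/eqP; exact: hb20.
  have hc : c != 0.
    by apply/eqP => hc0; move/eqP: hb; apply; rewrite eb hc0 scale0r.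
  have -> : Xw b = Xw u by rewrite /Xw eb (pw_scaleinv hH hc hu).
  exact: same_refl.
case: (eqVneq c 0) => hc.
  have hbu : ipH b u = 0 by [].
  have -> : Xw b = Xw (nrm ipH b) by rewrite /Xw (pw_nrm hH hb).
  exact: same_sym (same_v_u huu (nrm_ip hH hb) (hperp _ hbu) hGu (hGn _ hGb)).
set w := c^-1 *: b2.
have hw : w != 0 by rewrite /w scaler_eq0 invr_eq0 negb_or hc hb20.
have hwu : ipH w u = 0 by rewrite /w (ipZl hH) hb2u mulr0.
have hGw : G w = 0 by rewrite /w (LAZ hGl) hGb2 scaler0.
have ht : 0 <= hnorm ipH w by apply: ltW; apply: (hnorm_gt0 hH hw).
have eb : b = c *: vs u (nrm ipH w) (hnorm ipH w).
  rewrite /vs -(nrm_scale hH hw) /w scalerDr [c *: (c^-1 *: _)]scalerA mulfV // scale1r /b2.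
  by rewrite addrC subrK.
have hvs : vs u (nrm ipH w) (hnorm ipH w) != 0.
  by apply/eqP => h0; move/eqP: hb; apply; rewrite eb h0 scaler0.
have -> : Xw b = Xw (vs u (nrm ipH w) (hnorm ipH w)) by rewrite /Xw eb (pw_scaleinv hH hc hvs).
exact: same_sym (rot huu (nrm_ip hH hw) (hperp _ hwu) hGu (hGn _ hGw) ht).
Qed.
End Rot.



Lemma repl_lift n (c : 'I_n.+1 -> H) i a j : replv c i a (lift i j) = c (lift i j).
Proof. by rewrite /replv lift_eqF. Qed.
Lemma repl_i n (c : 'I_n -> H) i a : replv c i a i = a.
Proof. by rewrite /replv eqxx. Qed.
Lemma repl_same n (c : 'I_n -> H) i : replv c i (c i) = c.
Proof.
apply: FunctionalExtensionality.functional_extensionality => j.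
by rewrite /replv; case: eqP => [->|].
Qed.

Lemma indep_ext n (c : 'I_n.+1 -> H) (i : 'I_n.+1) G w :
  RangeOf ipH G (fun j => c (lift i j)) -> lin_indep (fun j => c (lift i j)) ->
  w != 0 -> G w = 0 -> lin_indep (replv c i w).
Proof.
move=> [[hl _ _] _ hf] hg hw hGw mu.
rewrite (sum_lift i) repl_i.
under eq_bigr do rewrite repl_lift.
move=> hs.
have hs' : \sum_(j < n) mu (lift i j) *: c (lift i j) = 0.
  have := congr1 G hs; rewrite (LAD hl) (LAZ hl) hGw scaler0 add0r (LA_sum hl) (LA0 hl).
  by under eq_bigr do rewrite (LAZ hl) hf.
have h0 := hg _ hs'.
have hmi : mu i = 0.
  move: hs; under eq_bigr do rewrite h0 scale0r.
  rewrite big1 // addr0 => /eqP; rewrite scaler_eq0 (negbTE hw) orbF => /eqP //.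
by apply: (@ord_case_lift _ i (fun l => mu l = 0)).
Qed.

Lemma GM n (c : 'I_n.+1 -> H) (i : 'I_n.+1) a b X Y : k = n.+1 ->
  lin_indep (replv c i a) -> lin_indep (replv c i b) ->
  RangeOf ipH X (replv c i a) -> RangeOf ipH Y (replv c i b) -> Same X Y.
Proof.
move=> hk ia ib rX rY.
pose g := fun j => c (lift i j).
have eg : forall d, (fun j => replv c i d (lift i j)) = g.
  by move=> d; apply: FunctionalExtensionality.functional_extensionality => j; rewrite repl_lift.
have ig : lin_indep g by rewrite -(eg a); apply: indep_lift.
have [G hG] := exists_range hH ig.
have hGp : isproj ipH G by case: hG.
have hGl : lin G by case: hGp.
have hcg : forall d j, replv c i d (lift i j) = g j by move=> d j; rewrite repl_lift.
have ha := ext_nonzero hG ia (hcg a); rewrite repl_i in ha.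
have hb := ext_nonzero hG ib (hcg b); rewrite repl_i in hb.
have eX := range_unique hH rX (extX_range hH hG ha (hcg a) (repl_i c i a)).
have eY := range_unique hH rY (extX_range hH hG hb (hcg b) (repl_i c i b)).
rewrite eX eY.
have hGk : forall w, w != 0 -> G w = 0 -> Pk ipH k (fun x => G x + pw ipH w x).
  move=> w hw hGw; rewrite hk.
  have hw' : w - G w != 0 by rewrite hGw subr0.
  have -> : (fun x => G x + pw ipH w x) = extX ipH G w by rewrite /extX hGw subr0.
  apply: (RangeOf_Pk hH (extX_range hH hG hw' (hcg w) (repl_i c i w))).
  by apply: (indep_ext (G := G)) => //; rewrite -/g.
have Gz : forall d, G (d - G d) = 0.
  by move=> d; rewrite (LAB hGl); case: hGp => _ _ ->; rewrite subrr.
exact: (two_dim hGp hGk ha hb (Gz a) (Gz b)).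
Qed.


Definition swp n (l j : 'I_n) := fun m : 'I_n => if m == l then j else if m == j then l else m.

Lemma swpK n (l j : 'I_n) m : swp l j (swp l j m) = m.
Proof.
rewrite /swp; case: (eqVneq m l) => [->|hml].
  case: (eqVneq j l) => [->|hjl]; first by rewrite ?eqxx.
  by rewrite ?eqxx.
case: (eqVneq m j) => [->|hmj]; first by rewrite eqxx.
by rewrite (negbTE hml) (negbTE hmj).
Qed.

Lemma range_swap n (sg : 'I_n -> 'I_n) (hsg : forall m, sg (sg m) = m) X (c : 'I_n -> H) :
  RangeOf ipH X c -> RangeOf ipH X (fun m => c (sg m)).
Proof.
move=> [hp hs hf]; split => //.
by move=> x; apply: span_swap.
Qed.

Lemma chain n (e f : 'I_n.+1 -> H) P P' : k = n.+1 ->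
  lin_indep e -> lin_indep f -> RangeOf ipH P e -> RangeOf ipH P' f -> Same P P'.
Proof.
move=> hk he hf hPe hPf'.
suff: forall j, (j <= n.+1)%N -> exists c : 'I_n.+1 -> H, [/\ lin_indep c,
   (forall i : 'I_n.+1, (i < j)%N -> c i = f i) & (forall X, RangeOf ipH X c -> Same P X)].
  move=> /(_ n.+1 (leqnn _)) [c [_ hc2 hc3]].
  have ecf : c = f by apply: FunctionalExtensionality.functional_extensionality => i; apply: hc2.
  by rewrite ecf in hc3; apply: hc3.
elim=> [_|j IH hj].
  exists e; split => // X hX.
  by rewrite (range_unique hH hX hPe); apply: same_refl.
have [c [hc1 hc2 hc3]] := IH (ltnW hj).
pose jj : 'I_n.+1 := Ordinal hj.
have [l [hl hli]] : exists l : 'I_n.+1, (j <= l)%N /\ lin_indep (replv c l (f jj)).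
  case: (Classical_Prop.classic (in_span c (f jj))) => hin; last first.
    by exists jj; split => //; apply: indep_repl_out.
  have [lam hlam] := hin.
  case: (Classical_Prop.classic (exists l : 'I_n.+1, (j <= l)%N /\ lam l != 0)) => [[l [hl hll]]|hno].
    by exists l; split => //; apply: (exchange hc1 hlam).
  exfalso.
  have hz : forall l : 'I_n.+1, (j <= l)%N -> lam l = 0.
    move=> l hl; case: (Classical_Prop.classic (lam l = 0)) => // hne.
    by case: hno; exists l; split => //; apply/eqP.
  pose d := fun l : 'I_n.+1 => if (l < j)%N then lam l else if l == jj then -1 else 0.
  have hd : \sum_l d l *: f l = 0.
    transitivity (\sum_l (lam l *: c l - (if l == jj then 1 else 0) *: f l)).
      apply: eq_bigr => l _; rewrite /d.
      case: (ltnP l j) => hlj.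
        have hne : l != jj by apply/eqP => ee; move: hlj; rewrite ee /= ltnn.
        by rewrite (negbTE hne) scale0r subr0 hc2.
      rewrite hz // scale0r sub0r; case: (l == jj); first by rewrite scaleN1r scale1r.
      by rewrite !scale0r oppr0.
    by rewrite sumrB sum_delta -hlam subrr.
  have := hf _ hd jj; rewrite /d /= ltnn eqxx => /eqP.
  by rewrite oppr_eq0 oner_eq0.
have hsK := swpK l jj.
exists (fun m => replv c l (f jj) (swp l jj m)); split.
- exact: (indep_swap hsK hli).
- move=> i hi.
  case: (eqVneq i jj) => [->|hij].
    have -> : swp l jj jj = l.
      by rewrite /swp; case: (eqVneq jj l) => [->|h]; rewrite ?eqxx.
    by rewrite /replv eqxx.
  have hij' : (i < j)%N.
    move: hi; rewrite ltnS leq_eqVlt => /orP [/eqP ee|//].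
    by move/eqP: hij; case; apply: ord_inj.
  have hil : i != l.
    by apply/eqP => ee; move: hij'; rewrite ee ltnNge hl.
  rewrite /swp (negbTE hil) (negbTE hij) /replv (negbTE hil); exact: hc2.
- move=> X hX.
  have hX' : RangeOf ipH X (replv c l (f jj)).
    have := range_swap hsK hX.
    have -> : (fun m => replv c l (f jj) (swp l jj (swp l jj m))) = replv c l (f jj).
      by apply: FunctionalExtensionality.functional_extensionality => m; rewrite hsK.
    by [].
  have [Xc hXc] := exists_range hH hc1.
  apply: (same_trans (hc3 _ hXc)).
  apply: (GM (c := c) (i := l) (a := c l) (b := f jj) hk); rewrite ?repl_same //.
Qed.

End Phi.

Unset Implicit Arguments.

Theorem proposition4p1 (R : realType) (H K : lmodType R[i])
  (ipH : H -> H -> R[i]) (ipK : K -> K -> R[i])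
  (hH : hilbert ipH) (hK : hilbert ipK)
  (k : nat) (hk : dim_gt H k)
  (phi : (H -> H) -> (K -> K)) (hphi : Fs_linear ipH ipK phi)
  (hPf : forall P, Pk ipH k P -> Pf ipK (phi P)) :
  exists m : nat, dim_ge K m /\ (forall P, Pk ipH k P -> Pk ipK m (phi P)).
Proof.
have hiH : inner_product ipH by case: hH.
have hiK : inner_product ipK by case: hK.
clear hk.
have all_same : forall P P', Pk ipH k P -> Pk ipH k P' -> Same ipK phi P P'.
  move=> P P' hP hP'.
  have [e [he hPe]] := Pk_RangeOf hP.
  have [f [hf hPf']] := Pk_RangeOf hP'.
  move: e f he hf hPe hPf' hPf hP hP'; case: k => [|n] e f he hf hPe hPf' hPf0 _ _.
    have ef : e = f by apply: FunctionalExtensionality.functional_extensionality; case.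
    rewrite ef in hPe; rewrite (range_unique hiH hPe hPf').
    exact: same_refl.
  exact: (chain hiH hiK hphi hPf0 erefl he hf hPe hPf').
case: (Classical_Prop.classic (exists P0, Pk ipH k P0)) => [[P0 hP0]|hno].
  have [m hm] := rank_of_Pf (hPf P0 hP0).
  exists m; split.
    by case: hm => v [hv _ _]; exists v.
  move=> P hP; apply: (proj1 (all_same P0 P hP0 hP m)).
  by split => //; case: (hPf P0 hP0).
exists 0%N; split.
  by exists (fun _ => 0) => c _; case.
by move=> P hP; exfalso; apply: hno; exists P.
Qed.
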